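(* Let $\ket\psi$ be a pure $n$-qubit state, $t\ge1$, and $p_t$ the output distribution of the $t$-copy hidden cut circuit on $\ket\psi$. Then for every $\bm s\in\{0,1\}^n$, $$\mathbb E_{\bm x\sim p_t}[\bm x\cdot\bm s] = \tfrac12\bigl(1-P(\bm s)^t\bigr).$$
   Context: Subsystems are bitstrings $\bm s\in\{0,1\}^n$ (qubit $j$ included iff $s_j=1$); $\bm x\cdot\bm s\in\{0,1\}$ is the dot product mod 2. $\rho_{\bm s}=\mathrm{Tr}_{\bar{\bm s}}\ket\psi\bra\psi$ and $P(\bm s)=\mathrm{Tr}(\rho_{\bm s}^2)$ (with $P(\bm 0)=1$). $\mathrm{SWAP}_{\bm s}$ swaps the qubits of subsystem $\bm s$ between two copies of the $n$-qubit space. The $t$-copy hidden cut circuit: an $n$-qubit group register is initialized to $\ket{0^n}$ and a state register to $(\ket\psi\ket\psi)^{\otimes t}$; apply $H^{\otimes n}$ to the group register; apply $\sum_{\bm s}\ket{\bm s}\bra{\bm s}\otimes \mathrm{SWAP}_{\bm s}^{\otimes t}$; apply $H^{\otimes n}$ to the group register; measure the group register in the computational basis; $p_t$ denotes the resulting distribution. *)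

(* Defs.v *)
From HB Require Import structures.
From mathcomp Require Import all_boot all_order all_algebra.
Set Implicit Arguments.
Unset Strict Implicit.
Unset Printing Implicit Defensive.
Import Order.TTheory GRing.Theory Num.Theory.
Local Open Scope ring_scope.

(* Bitstrings in {0,1}^n: computational-basis labels of n qubits, and also
   subsystems s (qubit j included iff s j = true). *)
Definition bits (n : nat) := {ffun 'I_n -> bool}.

Definition dotb (n : nat) (x s : bits n) : bool :=
  odd (\sum_(j < n) (x j && s j)).

Section QC.
Variable C : numClosedFieldType.
Variable n : nat.

Definition normalized (psi : bits n -> C) : Prop :=
  \sum_(b : bits n) `|psi b| ^+ 2 = 1.

(* configuration a supported inside s (i.e. a basis label of subsystem s) *)
Definition supp_in (s a : bits n) : bool := [forall j, ~~ s j ==> ~~ a j].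

Definition merge (s a c : bits n) : bits n :=
  [ffun j => if s j then a j else c j].

(* reduced density matrix rho_s = Tr_{complement of s} |psi><psi|,
   indexed by basis labels a, a' of the subsystem s *)
Definition rho (psi : bits n -> C) (s a a' : bits n) : C :=
  \sum_(c : bits n | supp_in (finfun (fun j => ~~ s j)) c)
     psi (merge s a c) * (psi (merge s a' c))^*.

Definition purity (psi : bits n -> C) (s : bits n) : C :=
  \sum_(a : bits n | supp_in s a) \sum_(a' : bits n | supp_in s a')
     rho psi s a a' * rho psi s a' a.

(* SWAP_s on two copies of the n-qubit space, as a map on basis labels *)
Definition swap_lbl (s : bits n) (p : bits n * bits n) : bits n * bits n :=
  ([ffun j => if s j then p.2 j else p.1 j],
   [ffun j => if s j then p.1 j else p.2 j]).

(* state register of t copies of |psi>|psi>: basis labels *)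
Definition streg (t : nat) := {ffun 'I_t -> bits n * bits n}.

Definition swap_st (t : nat) (s : bits n) (beta : streg t) : streg t :=
  [ffun c => swap_lbl s (beta c)].

Definition init_st (t : nat) (psi : bits n -> C) (beta : streg t) : C :=
  \prod_(c < t) (psi (beta c).1 * psi (beta c).2).

(* joint vectors of group register (x) state register *)
Definition jvec (t : nat) := bits n -> streg t -> C.

Definition hadamard (g g' : bits n) : C :=
  (-1) ^+ dotb g g' / sqrtC (2 ^+ n).

Definition apply_H (t : nat) (v : jvec t) : jvec t :=
  fun g beta => \sum_(g' : bits n) hadamard g g' * v g' beta.

(* sum_s |s><s| (x) SWAP_s^{(x) t}; SWAP_s^{(x)t} is an involutive
   permutation of basis states, so (SWAP v)(beta) = v(SWAP beta) *)
Definition apply_CSWAP (t : nat) (v : jvec t) : jvec t :=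
  fun g beta => v g (swap_st g beta).

Definition init_joint (t : nat) (psi : bits n -> C) : jvec t :=
  fun g beta => (g == [ffun => false])%:R * init_st psi beta.

Definition hidden_cut_dist (t : nat) (psi : bits n -> C) (x : bits n) : C :=
  let v := apply_H (apply_CSWAP (apply_H (@init_joint t psi))) in
  \sum_(beta : streg t) `|v x beta| ^+ 2.

End QC.

Arguments hidden_cut_dist {C n} t psi x.

(* Main.v *)
Require Import Defs.
From mathcomp Require Import all_boot all_order all_algebra.
From mathcomp Require Import ring.
Set Implicit Arguments. Unset Strict Implicit. Unset Printing Implicit Defensive.
Import Order.TTheory GRing.Theory Num.Theory.
Local Open Scope ring_scope.

Section Aux.
Variable C : numClosedFieldType.
Variable n : nat.
Implicit Types x g h s : bits n.

Definition sg x g : C := (-1) ^+ dotb x g.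
Definition bxor g h : bits n := [ffun j => g j (+) h j].
Definition bz : bits n := [ffun => false].

Lemma sgE x g : sg x g = \prod_(j < n) (-1) ^+ (x j && g j).
Proof. by rewrite /sg /dotb signr_odd expr_sum. Qed.

Lemma sgC x g : sg x g = sg g x.
Proof. by rewrite !sgE; apply: eq_bigr => j _; rewrite andbC. Qed.

Lemma sgM x g h : sg x (bxor g h) = sg x g * sg x h.
Proof.
rewrite !sgE -big_split; apply: eq_bigr => j _ /=; rewrite ffunE.
by case: (x j); case: (g j); case: (h j); rewrite /= ?expr0 ?expr1 ?mulrNN ?mulr1 ?mul1r.
Qed.

Lemma sg0 x : sg x bz = 1.
Proof. by rewrite sgE big1 // => j _; rewrite ffunE andbF. Qed.

Lemma card_bits : #|{: bits n}| = (2 ^ n)%N.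
Proof. by rewrite card_ffun card_bool card_ord. Qed.

Lemma char_sum g : \sum_x sg x g = (g == bz)%:R * 2 ^+ n.
Proof.
have [->|nz] := eqVneq g bz.
  rewrite mul1r (eq_bigr (fun _ => 1)) ?sumr_const ?card_bits; last by move=> x _; rewrite sg0.
  by rewrite natrX.
rewrite mul0r.
have [j gj] : exists j, g j.
  apply/existsP; apply: contra_neqT nz => /existsPn H; apply/ffunP => j.
  by rewrite ffunE; apply/negbTE/H.
pose e : bits n := [ffun k => k == j].
have sge : sg e g = -1.
  rewrite sgE (bigD1 j) //= ffunE eqxx gj expr1 big1 ?mulr1 // => k kj.
  by rewrite ffunE (negbTE kj).
have inj : injective (fun x => bxor x e).
  move=> x y /= /ffunP H; apply/ffunP => k; move: (H k); rewrite !ffunE.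
  by case: (x k); case: (y k); case: (_ == _).
set S := \sum_x sg x g.
have HS : S = - S.
  rewrite {1}/S (reindex_inj inj) /S -sumrN; apply: eq_bigr => x _ /=.
  by rewrite sgC sgM [sg g e]sgC sge mulrN1 sgC.
have : S + S = 0 by rewrite {1}HS addNr.
by rewrite -mulr2n -mulr_natr => /eqP; rewrite mulf_eq0 pnatr_eq0 orbF => /eqP.
Qed.


Lemma swap_lblK s p : swap_lbl s (swap_lbl s p) = p.
Proof.
case: p => a b; rewrite /swap_lbl /=; congr pair; apply/ffunP => j; rewrite !ffunE;
by case: (s j).
Qed.

Lemma swap_lblX g s p : swap_lbl (bxor g s) (swap_lbl g p) = swap_lbl s p.
Proof.
case: p => a b; rewrite /swap_lbl /=; congr pair; apply/ffunP => j; rewrite !ffunE /=;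
by case: (s j); case: (g j).
Qed.

Variable t : nat.
Lemma swap_stK g b : swap_st g (swap_st g b) = b :> streg n t.
Proof. by apply/ffunP => c; rewrite !ffunE swap_lblK. Qed.

Lemma swap_stX g s b : swap_st (bxor g s) (swap_st g b) = swap_st s b :> streg n t.
Proof. by apply/ffunP => c; rewrite !ffunE swap_lblX. Qed.

Let N : C := 2 ^+ n.

Lemma N_neq0 : N != 0.
Proof. by rewrite /N expf_neq0 // pnatr_eq0. Qed.

Lemma N_conj : N^* = N.
Proof. by rewrite geC0_conj // /N exprn_ge0 // ler0n. Qed.

Lemma hadamardE g g' : hadamard C g g' = sg g g' / sqrtC N.
Proof. by []. Qed.

Lemma v3E (psi : bits n -> C) x beta :
  apply_H (apply_CSWAP (apply_H (@init_joint C n t psi))) x beta =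
  N^-1 * \sum_g sg x g * init_st psi (swap_st g beta).
Proof.
rewrite /apply_H /apply_CSWAP /init_joint mulr_sumr; apply: eq_bigr => g _.
rewrite (bigD1 bz) //= big1; last first.
  by move=> g' /negbTE ->; rewrite mul0r mulr0.
rewrite eqxx mul1r addr0 !hadamardE sg0 -/N.
have hr : (sqrtC N)^-1 * (sqrtC N)^-1 = N^-1 by rewrite -invfM -expr2 sqrtCK.
rewrite -hr; ring.
Qed.

Lemma normCK' (a : C) : `|a| ^+ 2 = a * a^*.
Proof. exact: normCK. Qed.
Lemma conjM (a b : C) : (a * b)^* = a^* * b^*.
Proof. exact: rmorphM. Qed.
Lemma conj_sum (I : finType) (G : I -> C) : (\sum_i G i)^* = \sum_i (G i)^*.
Proof. exact: rmorph_sum. Qed.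

Lemma sg_conj x g : (sg x g)^* = sg x g.
Proof. by rewrite /sg rmorphXn rmorphN1. Qed.

Lemma xor_eq0 g h s : (bxor (bxor g h) s == bz) = (h == bxor g s).
Proof.
apply/eqP/eqP => H; apply/ffunP => j; [move/ffunP: H => /(_ j) | rewrite H];
rewrite !ffunE /=; [|by case: (g j); case: (s j)].
by case: (g j); case: (h j); case: (s j).
Qed.

Variable psi : bits n -> C.
Let F g (b : streg n t) := init_st psi (swap_st g b).
Definition Q s := \sum_(b : streg n t) init_st psi b * (init_st psi (swap_st s b))^*.

Lemma term_eq x b s :
  `|apply_H (apply_CSWAP (apply_H (@init_joint C n t psi))) x b| ^+ 2 * sg x s =
  N^-1 * N^-1 * \sum_g \sum_h sg x (bxor (bxor g h) s) * (F g b * (F h b)^*).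
Proof.
have NiC : (N^-1)^* = N^-1 by rewrite geC0_conj // invr_ge0 /N exprn_ge0 // ler0n.
rewrite v3E normCK' rmorphM fmorphV /N rmorphXn rmorph_nat -/N rmorph_sum.
rewrite [X in _ * (N^-1 * X) * _](_ : _ = \sum_g sg x g * (F g b)^*); last first.
  by apply: eq_bigr => g _; rewrite rmorphM /sg rmorphXn rmorphN1.
set A := \sum_g sg x g * init_st psi (swap_st g b).
set B := \sum_g sg x g * (F g b)^*.
have AB : A * B = \sum_g \sum_h (sg x g * F g b) * (sg x h * (F h b)^*).
  rewrite /A /B big_distrl; apply: eq_bigr => g _; rewrite big_distrr.
  by [].
transitivity (N^-1 * N^-1 * (A * B * sg x s)); first by ring.
rewrite AB mulr_suml; congr (_ * _); apply: eq_bigr => g _.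
rewrite mulr_suml; apply: eq_bigr => h _.
rewrite !sgM; ring.
Qed.

Lemma G_shift g s :
  \sum_(b : streg n t) F g b * (F (bxor g s) b)^* = Q s.
Proof.
rewrite /Q (reindex_inj (can_inj (swap_stK g))) /=.
by apply: eq_bigr => b _; rewrite /F swap_stK swap_stX.
Qed.

Lemma sum_p_sg s : \sum_x hidden_cut_dist t psi x * sg x s = Q s.
Proof.
rewrite /hidden_cut_dist /=.
under eq_bigr => x _ do rewrite mulr_suml.
under eq_bigr => x _ do under eq_bigr => b _ do rewrite term_eq.
under eq_bigr => x _ do rewrite -mulr_sumr.
rewrite -mulr_sumr.
transitivity (N^-1 / N * \sum_g \sum_h ((h == bxor g s)%:R * N) *
   \sum_(b : streg n t) F g b * (F h b)^*).
  congr (_ * _).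
  rewrite exchange_big /=.
  under eq_bigr => b _ do rewrite exchange_big.
  under eq_bigr => b _ do under eq_bigr => g _ do rewrite exchange_big.
  rewrite exchange_big; apply: eq_bigr => g _.
  rewrite exchange_big; apply: eq_bigr => h _.
  rewrite mulr_sumr; apply: eq_bigr => b _.
  by rewrite -mulr_suml char_sum xor_eq0.
rewrite (eq_bigr (fun g => N * Q s)); last first.
  move=> g _; rewrite (bigD1 (bxor g s)) //= [X in _ + X]big1 ?eqxx ?mul1r ?addr0 ?G_shift //.
  by move=> h /negbTE ->; rewrite !mul0r.

rewrite sumr_const card_bits -mulr_natr natrX -/N.
by field; rewrite N_neq0.
Qed.


Definition bmask (s b : bits n) : bits n := [ffun j => s j && b j].
Definition cmpl (s : bits n) : bits n := finfun (fun j => ~~ s j).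

Lemma split_sum s (G : bits n -> C) :
  \sum_b G b = \sum_(a | supp_in s a) \sum_(c | supp_in (cmpl s) c) G (Defs.merge s a c).
Proof.
rewrite pair_big_dep /=.
rewrite (reindex_onto (fun p : bits n * bits n => Defs.merge s p.1 p.2)
                      (fun b => (bmask s b, bmask (cmpl s) b))) /=; last first.
  move=> b _; apply/ffunP => j; rewrite !ffunE /=; by case: (s j).
apply: eq_bigl => [[a c]] /=. 
apply/eqP/andP => [[Ha Hc]|[/forallP Ha /forallP Hc]]; last first.
  congr pair; apply/ffunP => j; rewrite !ffunE /=.
    by move: (Ha j); case: (s j) => //= /negbTE.
  by move: (Hc j); rewrite ffunE; case: (s j) => //= /negbTE.
split; apply/forallP => j; [move/ffunP: Ha => /(_ j) | move/ffunP: Hc => /(_ j)];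
  rewrite !ffunE /=; case: (s j) => //= <- //.
Qed.

Definition q s := \sum_(p : bits n * bits n)
  psi p.1 * psi p.2 * (psi (swap_lbl s p).1 * psi (swap_lbl s p).2)^*.

Lemma Q_q s : Q s = q s ^+ t.
Proof.
have -> : q s ^+ t = \prod_(c < t) q s by rewrite prodr_const card_ord.
rewrite /Q /q bigA_distr_bigA /=.
apply: eq_big => // b _.
rewrite /init_st rmorph_prod -big_split /=; apply: eq_bigr => c _.
by rewrite ffunE.
Qed.

Lemma sum_pair (G : bits n * bits n -> C) :
  \sum_p G p = \sum_a \sum_b G (a, b).
Proof. by rewrite pair_bigA; apply: eq_bigr => [[a b]]. Qed.

Lemma swap_merge s a c a' c' :
  swap_lbl s (Defs.merge s a c, Defs.merge s a' c') = (Defs.merge s a' c, Defs.merge s a c').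
Proof. by rewrite /swap_lbl /=; congr pair; apply/ffunP => j; rewrite !ffunE; case: (s j). Qed.

Lemma q_purity s : q s = purity psi s.
Proof.
rewrite /q sum_pair /= (split_sum s).
under eq_bigr => a _ do under eq_bigr => c _ do rewrite (split_sum s).
rewrite /purity /rho; apply: eq_bigr => a _.
under [RHS]eq_bigr => a' _ do rewrite big_distrl /=.
rewrite [RHS]exchange_big /=; apply: eq_bigr => c _.
apply: eq_bigr => a' _; rewrite big_distrr /=; apply: eq_bigr => c' _.
have -> : [ffun j => if s j then Defs.merge s a' c' j else Defs.merge s a c j] = Defs.merge s a' c.
  by apply/ffunP => j; rewrite !ffunE; case: (s j).
have -> : [ffun j => if s j then Defs.merge s a c j else Defs.merge s a' c' j] = Defs.merge s a c'.
  by apply/ffunP => j; rewrite !ffunE; case: (s j).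
by rewrite rmorphM mulrACA.
Qed.

Lemma q0 : normalized psi -> q bz = 1.
Proof.
move=> Hn; rewrite /q sum_pair.
rewrite -[1]mulr1 -{1}Hn -{1}Hn big_distrl; apply: eq_bigr => a _.
rewrite big_distrr; apply: eq_bigr => b _.
have -> : swap_lbl bz (a, b) = (a, b).
  by rewrite /swap_lbl; congr pair; apply/ffunP => j; rewrite !ffunE.
by rewrite /= !normCK' rmorphM mulrACA.
Qed.

Lemma final_sum : normalized psi ->
  \sum_x hidden_cut_dist t psi x * (dotb x bz)%:R = 0 ->
  True.
Proof. by []. Qed.
End Aux.

Lemma dotb_sg (C : numClosedFieldType) n (x s : bits n) :
  (dotb x s)%:R = (1 - sg C x s) / 2 :> C.
Proof.
rewrite /sg; case: (dotb x s) => /=; rewrite ?expr1 ?expr0 ?subrr ?mul0r //.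
by rewrite opprK -mulr2n divff // pnatr_eq0.
Qed.

Theorem mainTheorem7 (C : numClosedFieldType) (n t : nat)
  (psi : bits n -> C) (s : bits n) :
  normalized psi -> (1 <= t)%N ->
  \sum_(x : bits n) hidden_cut_dist t psi x * (dotb x s)%:R
    = (1 - purity psi s ^+ t) / 2.
Proof.
move=> Hn _.
transitivity ((\sum_x hidden_cut_dist t psi x * sg C x (bz n)
               - \sum_x hidden_cut_dist t psi x * sg C x s) / 2).
  rewrite -sumrB mulr_suml; apply: eq_bigr => x _.
  rewrite sg0 dotb_sg; ring.
by rewrite !sum_p_sg !Q_q q0 // q_purity expr1n.
Qed.
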